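(* Let $H$ be a group, $U\subseteq H$ a subgroup, $E$ a field with an $H$-action, and $g_1,\dots,g_N$ elements of order $2$ in $N_H(U)/U$ which generate an infinite subgroup of $N_H(U)/U$. For each $j$ let $\langle U,g_j\rangle$ be the subgroup generated by $U$ and a lift of $g_j$. Then the natural map of $E$-semilinear representations $$r:E[H/U]\to\bigoplus_{j=1}^NE[H/\langle U,g_j\rangle],\qquad [hU]\mapsto\big([h\langle U,g_j\rangle]\big)_{j},$$ is injective.
   Context: $N_H(U)$ is the normalizer of $U$ in $H$. $E[S]$ for an $H$-set $S$ is the $E$-vector space with basis $S$ and $H$-action $h(e[s])=h(e)[hs]$. *)

(* Defs.v *)
(* H is an arbitrary (possibly infinite) group: MathComp's
   [groupType] from boot/monoid.v (not a finGroupType). *)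
From HB Require Import structures.
From mathcomp Require Import all_boot all_order all_algebra all_fingroup.
From Stdlib Require Import ClassicalEpsilon.

Set Implicit Arguments.
Unset Strict Implicit.
Unset Printing Implicit Defensive.

Import GRing.Theory.

Local Open Scope group_scope.

Definition asbool (P : Prop) : bool :=
  if excluded_middle_informative P then true else false.

Section GroupDefs.
Variable H : groupType.

Definition is_subgroup (V : H -> Prop) : Prop :=
  V 1 /\ (forall x y, V x -> V y -> V (x * y^-1)).

Definition gen (S : H -> Prop) : H -> Prop :=
  fun x => forall V, is_subgroup V -> (forall s, S s -> V s) -> V x.

Definition in_normalizer (U : {pred H}) (x : H) : Prop :=
  forall u, (x * u * x^-1 \in U) = (u \in U).

(* the class gU of g in N_H(U)/U has order exactly 2 *)
Definition order2_mod (U : {pred H}) (g : H) : Prop :=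
  g \notin U /\ g * g \in U.

(* the subset K of H meets infinitely many left cosets of U, i.e. (for a
   subgroup K of N_H(U) containing U) the subgroup K/U of N_H(U)/U is
   infinite *)
Definition infinitely_many_cosets (U : {pred H}) (K : H -> Prop) : Prop :=
  ~ (exists s : seq H, forall x, K x -> exists2 y, y \in s & y^-1 * x \in U).

Definition genUg (U : {pred H}) (g : H) : H -> Prop :=
  gen (fun x => x \in U \/ x = g).

(* Free E-vector space E[H/V] on the left cosets of a subgroup V.
   An element of E[H/V] is a finitely supported function H/V -> E; we view
   it as a function H -> E constant on left cosets hV.  The formal
   combination sum_i c_i [x_i V], given as a list l = [:: (c_i, x_i)],
   is the function  hV |-> sum of the c_i with x_i V = hV.  Every element of
   E[H/V] is of this form. *)
Definition fvs_class (E : fieldType) (V : H -> Prop) (l : seq (E * H)) : H -> E :=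
  fun h => (\sum_(p <- l | asbool (V ((h^-1 * p.2)%g))) p.1)%R.

End GroupDefs.

(* Main.v *)
Require Import Defs.
From HB Require Import structures.
From mathcomp Require Import all_boot all_order all_algebra all_fingroup.
From Stdlib Require Import ClassicalEpsilon.

Import GRing.Theory.
Local Open Scope group_scope.

Lemma asboolP (P : Prop) : reflect P (asbool P).
Proof. rewrite /asbool; case: excluded_middle_informative => h; by constructor. Qed.

Section Helpers.
Variable H : groupType.
Variable U : {pred H}.
Hypothesis hU : group_closed U.

Lemma U1 : (1 : H) \in U. Proof. exact: hU.1. Qed.
Lemma UM {x y} : x \in U -> y \in U -> x * y \in U.
Proof. move=> xU yU; exact: (group_closedM hU xU yU). Qed.
Lemma UV {x} : x \in U -> x^-1 \in U.
Proof. move=> xU; exact: (group_closedV hU xU). Qed.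

Lemma conjV_in g v : in_normalizer U g -> (g^-1 * v * g \in U) = (v \in U).
Proof.
move=> hg; rewrite -hg.
by rewrite !mulgA mulgV mul1g mulgK.
Qed.

Lemma S_subgroup g : in_normalizer U g -> order2_mod U g ->
  is_subgroup (fun y => y \in U \/ g^-1 * y \in U).
Proof.
move=> hg [gnU g2]; split; first by left; exact: U1.
move=> x y [xU|xU] [yU|yU].
- by left; apply: UM => //; apply: UV.
- right.
  have -> : g^-1 * (x * y^-1) = (g^-1 * (x * (g^-1 * y)^-1) * g) * (g * g)^-1.
    by rewrite !invMg !invgK !mulgA !mulgK.
  apply: UM; last exact: UV.
  by rewrite conjV_in //; apply: UM => //; apply: UV.
- right; rewrite mulgA; apply: UM => //; exact: UV.
- left.
  have -> : x * y^-1 = g * ((g^-1 * x) * (g^-1 * y)^-1) * g^-1.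
    by rewrite !invMg !invgK !mulgA mulgV mul1g mulgK.
  by rewrite hg; apply: UM => //; apply: UV.
Qed.

Lemma gen_mul (S : H -> Prop) x y : gen S x -> gen S y -> gen S (x * y).
Proof.
move=> gx gy V [V1 VB] hS.
have Vy := gy V (conj V1 VB) hS.
have Vyi : V y^-1 by have := VB _ _ V1 Vy; rewrite mul1g.
by have := VB _ _ (gx V (conj V1 VB) hS) Vyi; rewrite invgK.
Qed.

Lemma genUg_iff g y : in_normalizer U g -> order2_mod U g ->
  genUg U g y <-> (y \in U \/ g^-1 * y \in U).
Proof.
move=> hg ho; split.
- move=> gy; apply: (gy (fun y => y \in U \/ g^-1 * y \in U)); first exact: S_subgroup.
  move=> s [sU| ->]; first by left.
  by right; rewrite mulVg; exact: U1.
- move=> [yU|yU]; first by move=> V _ hS; apply: hS; left.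
  have -> : y = g * (g^-1 * y) by rewrite mulKVg.
  apply: gen_mul; first by move=> V _ hS; apply: hS; right.
  by move=> V _ hS; apply: hS; left.
Qed.

Variable E : fieldType.

Definition F (l : seq (E * H)) (h : H) : E :=
  (\sum_(p <- l | (h^-1 * p.2)%g \in U) p.1)%R.

Lemma fvsU l h : fvs_class (fun x => x \in U) l h = F l h.
Proof. apply: eq_bigl => p; exact/asboolP/idP. Qed.

Lemma sum_or (l : seq (E * H)) (a b : pred (E * H)) (G : E * H -> E) :
  (forall p, ~~ (a p && b p)) ->
  (\sum_(p <- l | a p || b p) G p = \sum_(p <- l | a p) G p + \sum_(p <- l | b p) G p)%R.
Proof.
move=> hab; elim: l => [|p l IH]; first by rewrite !big_nil addr0.
rewrite !big_cons IH; have := hab p.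
case: (a p); case: (b p) => //= _.
- by rewrite addrA.
- by rewrite addrCA.
Qed.

Lemma fvsG g l h : in_normalizer U g -> order2_mod U g ->
  fvs_class (genUg U g) l h = (F l h + F l (h * g))%R.
Proof.
move=> hg ho; rewrite /fvs_class /F -sum_or.
- apply: eq_bigl => p; apply/asboolP/orP; rewrite genUg_iff //;
  by rewrite invMg -mulgA.
- move=> p; apply/negP => /andP[h1 h2]; case: ho => gnU _.
  rewrite invMg -mulgA in h2.
  have := UM h1 (UV h2); rewrite invMg invgK mulgA mulgV mul1g.
  by rewrite (negbTE gnU).
Qed.

Lemma F_coset l h u : u \in U -> F l (h * u) = F l h.
Proof.
move=> uU; apply: eq_bigl => p; rewrite invMg -mulgA.
apply/idP/idP => hp.
- by have := UM uU hp; rewrite mulKVg.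
- exact: UM (UV uU) hp.
Qed.

Lemma F_nz l h : F l h != 0%R -> exists2 p, p \in l & h^-1 * p.2 \in U.
Proof.
move=> nz; apply/hasP; apply: contraNT nz => /hasPn hn.
apply/eqP; rewrite /F big_seq_cond big1 // => p /andP[pin cp].
by rewrite (negbTE (hn p pin)) in cp.
Qed.

End Helpers.
Arguments F {H} U {E}.
Arguments F_nz {H U E l h}.
Arguments fvsG {H U} hU {E}.
Arguments F_coset {H U} hU {E}.

Theorem mainTheorem19 (H : groupType) (U : {pred H}) (E : fieldType)
  (act : H -> {rmorphism E -> E})
  (act1 : forall e, act 1 e = e)
  (actM : forall x y e, act (x * y) e = act x (act y e))
  (N : nat) (g : 'I_N -> H)
  (hU : group_closed U)
  (hgN : forall j, in_normalizer U (g j))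
  (hg2 : forall j, order2_mod U (g j))
  (hinf : infinitely_many_cosets U (gen (fun x => x \in U \/ exists j, x = g j))) :
  forall l1 l2 : seq (E * H),
    (forall j, fvs_class (genUg U (g j)) l1 =1 fvs_class (genUg U (g j)) l2) ->
    fvs_class (fun x => x \in U) l1 =1 fvs_class (fun x => x \in U) l2.
Proof.
move=> l1 l2 hyp.
pose f h := (F U l1 h - F U l2 h)%R.
have fg j h : f (h * g j) = (- f h)%R.
  have := hyp j h; rewrite !fvsG // => e.
  rewrite /f opprB; apply/eqP.
  rewrite subr_eq addrAC eq_sym subr_eq (addrC (F U l1 (h * g j))) -e.
  by [].
have fsign k : gen (fun x => x \in U \/ exists j, x = g j) k ->
    forall h, f (h * k) = f h \/ f (h * k) = (- f h)%R.
  move=> gk; apply: (gk (fun k => forall h, f (h * k) = f h \/ f (h * k) = (- f h)%R)).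
  - split; first by move=> h; left; rewrite mulg1.
    move=> x y Vx Vy h.
    have [A|A] := Vy (h * (x * y^-1)); rewrite -mulgA mulgVK in A;
      have [B|B] := Vx h.
    + by left; rewrite -A B.
    + by right; rewrite -A B.
    + by right; rewrite -B A opprK.
    + by left; rewrite -(opprK (f (h * (x * y^-1)))) -A B opprK.
  - move=> s [sU|[j ->]] h.
    + by left; rewrite /f !F_coset.
    + by right; exact: fg.
have f0 h : f h = 0%R.
  apply/eqP; apply: contraT => nz; exfalso; apply: hinf.
  exists (map (fun p => h^-1 * p.2) (l1 ++ l2)) => x Kx.
  have nzx : f (h * x) != 0%R.
    by have [->|->] := fsign x Kx h => //; rewrite oppr_eq0.
  have [p pin pU] : exists2 p, p \in l1 ++ l2 & (h * x)^-1 * p.2 \in U.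
    case: (boolP (F U l1 (h * x) == 0%R)) => [/eqP e1|n1].
    + case: (boolP (F U l2 (h * x) == 0%R)) => [/eqP e2|n2].
      * by move: nzx; rewrite /f e1 e2 subrr eqxx.
      * by have [p pin pU] := F_nz n2; exists p => //; rewrite mem_cat pin orbT.
    + by have [p pin pU] := F_nz n1; exists p => //; rewrite mem_cat pin.
  exists (h^-1 * p.2); first exact: map_f.
  have := @UV H U hU _ pU; rewrite !invMg !invgK.
  by rewrite !mulgA.
move=> h; rewrite !fvsU; apply/eqP; rewrite -subr_eq0; exact/eqP/f0.
Qed.
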